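(* Let $z_0\in\mathbb C\setminus\{0\}$ and let $S_n=z_0+\sum_{j=1}^nX_j$, where $X_1,X_2,\dots$ are i.i.d. with $\mathbf P(X_1=\sqrt2)=\mathbf P(X_1=-\sqrt2)=\mathbf P(X_1=i\sqrt2)=\mathbf P(X_1=-i\sqrt2)=1/4$. Let $\Theta(n)=\sum_{k=1}^n\phi(k)$, where $\phi(k)=0$ if $S_{k-1},S_k$ and $0$ are collinear, and otherwise $\phi(k)$ is the unique number in $(-\pi,\pi)$ with $\frac{S_{k-1}}{|S_{k-1}|}e^{i\phi(k)}=\frac{S_k}{|S_k|}$. Then there is a constant $C$ (independent of $z_0$ and $n$) such that for all $n\ge2$, $$\mathbf E\sup_{1\le k\le n}|\Theta(k)|^2\le C\log^2n.$$ *)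

(* Defs.v *)
(* complex numbers represented as pairs (x, y) = x + i y. *)
From Stdlib Require Import Reals Lra List ClassicalEpsilon.
Import ListNotations.
Open Scope R_scope.

Definition pt := (R * R)%type.

Definition step (d : nat) : pt :=
  match d with
  | O => (sqrt 2, 0)
  | 1%nat => (- sqrt 2, 0)
  | 2%nat => (0, sqrt 2)
  | _ => (0, - sqrt 2)
  end.

Definition padd (u v : pt) : pt := (fst u + fst v, snd u + snd v).

(* S_k = z0 + X_1 + ... + X_k, where xs lists the step labels X_1, X_2, ... *)
Definition walk (z0 : pt) (xs : list nat) (k : nat) : pt :=
  fold_left padd (map step (firstn k xs)) z0.

Definition cnorm (u : pt) : R := sqrt (fst u ^ 2 + snd u ^ 2).
Definition cunit (u : pt) : pt := (fst u / cnorm u, snd u / cnorm u).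
(* multiplication by e^{i t} *)
Definition rot (t : R) (u : pt) : pt :=
  (cos t * fst u - sin t * snd u, sin t * fst u + cos t * snd u).
(* u, v and 0 are collinear iff the cross product vanishes *)
Definition cross (u v : pt) : R := fst u * snd v - snd u * fst v.

Definition phi (z0 : pt) (xs : list nat) (k : nat) : R :=
  let u := walk z0 xs (k - 1) in
  let v := walk z0 xs k in
  match Req_EM_T (cross u v) 0 with
  | left _ => 0
  | right _ => epsilon (inhabits 0)
                 (fun t => -PI < t < PI /\ rot t (cunit u) = cunit v)
  end.

Fixpoint Theta (z0 : pt) (xs : list nat) (n : nat) : R :=
  match n with
  | O => 0
  | S m => Theta z0 xs m + phi z0 xs n
  end.

Definition supTheta2 (z0 : pt) (xs : list nat) (n : nat) : R :=
  fold_left (fun acc k => Rmax acc (Rabs (Theta z0 xs k) ^ 2)) (seq 1 n) 0.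

Fixpoint allseqs (n : nat) : list (list nat) :=
  match n with
  | O => [nil]
  | S m => flat_map (fun s => map (fun d => d :: s) [0%nat; 1%nat; 2%nat; 3%nat]) (allseqs m)
  end.

(* expectation of a functional of (X_1..X_n), X_i i.i.d. uniform on the 4 steps *)
Definition Expect (n : nat) (f : list nat -> R) : R :=
  fold_right Rplus 0 (map f (allseqs n)) / 4 ^ n.

(* Main.v *)
Require Import Defs.
From Stdlib Require Import Reals List.
From Stdlib Require Import Reals Lra Lia Psatz List ClassicalEpsilon.
Import ListNotations.
Open Scope R_scope.

Definition avg4 (F : nat -> R) : R := (F 0%nat + F 1%nat + F 2%nat + F 3%nat) / 4.

Lemma avg4_ext F G : (forall d, F d = G d) -> avg4 F = avg4 G.
Proof. intros H; unfold avg4; rewrite !H; reflexivity. Qed.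

Lemma avg4_le F G : (forall d, F d <= G d) -> avg4 F <= avg4 G.
Proof. intros H; unfold avg4; specialize (H 0%nat) as H0; specialize (H 1%nat) as H1;
  specialize (H 2%nat) as H2; specialize (H 3%nat) as H3; lra. Qed.

Definition sumL (l : list R) := fold_right Rplus 0 l.

Lemma sum_flat (f : list nat -> R) (l : list (list nat)) :
  sumL (map f (flat_map (fun s => map (fun d => d :: s) [0%nat; 1%nat; 2%nat; 3%nat]) l))
  = sumL (map (fun s => f (0%nat :: s) + f (1%nat :: s) + f (2%nat :: s) + f (3%nat :: s)) l).
Proof.
  induction l as [|s l IH]; [reflexivity|].
  unfold sumL in *; simpl in *; rewrite IH; ring.
Qed.

Lemma sumL_plus {A} (f g : A -> R) l : sumL (map (fun x => f x + g x) l) = sumL (map f l) + sumL (map g l).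
Proof. induction l; unfold sumL in *; simpl; [ring|]. rewrite IHl; ring. Qed.

Lemma Expect_0 f : Expect 0 f = f nil.
Proof. unfold Expect; simpl; field. Qed.

Lemma Expect_S m f : Expect (S m) f = avg4 (fun d => Expect m (fun s => f (d :: s))).
Proof.
  unfold Expect, avg4. simpl allseqs. fold (sumL (map f (flat_map (fun s => map (fun d => d :: s) [0%nat; 1%nat; 2%nat; 3%nat]) (allseqs m)))).
  rewrite sum_flat, !sumL_plus. unfold sumL. simpl pow.
  assert (0 < 4 ^ m) by (apply pow_lt; lra). field. lra.
Qed.

Lemma Expect_ext_len n f g : (forall xs, length xs = n -> f xs = g xs) -> Expect n f = Expect n g.
Proof.
  revert f g; induction n; intros f g H.
  - rewrite !Expect_0; apply H; reflexivity.
  - rewrite !Expect_S; apply avg4_ext; intro d; apply IHn; intros; apply H; simpl; lia.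
Qed.

Lemma Expect_ext n f g : (forall xs, f xs = g xs) -> Expect n f = Expect n g.
Proof. intros; apply Expect_ext_len; auto. Qed.

Lemma Expect_le_len n f g : (forall xs, length xs = n -> f xs <= g xs) -> Expect n f <= Expect n g.
Proof.
  revert f g; induction n; intros f g H.
  - rewrite !Expect_0; apply H; reflexivity.
  - rewrite !Expect_S; apply avg4_le; intro d; apply IHn; intros; apply H; simpl; lia.
Qed.

Lemma Expect_le n f g : (forall xs, f xs <= g xs) -> Expect n f <= Expect n g.
Proof. intros; apply Expect_le_len; auto. Qed.

Lemma Expect_const n c : Expect n (fun _ => c) = c.
Proof. induction n; [rewrite Expect_0; reflexivity|]. rewrite Expect_S.
  unfold avg4; rewrite IHn; field. Qed.

Lemma Expect_plus n f g : Expect n (fun xs => f xs + g xs) = Expect n f + Expect n g.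
Proof. revert f g; induction n; intros f g; [rewrite !Expect_0; reflexivity|].
  rewrite !Expect_S; unfold avg4; rewrite !IHn; field. Qed.

Lemma Expect_scal n c f : Expect n (fun xs => c * f xs) = c * Expect n f.
Proof. revert f; induction n; intros f; [rewrite !Expect_0; reflexivity|].
  rewrite !Expect_S; unfold avg4; rewrite !IHn; field. Qed.

Lemma Expect_opp n f : Expect n (fun xs => - f xs) = - Expect n f.
Proof. rewrite <- (Expect_ext n (fun xs => -1 * f xs)); [rewrite Expect_scal; ring| intros; ring]. Qed.

Lemma Expect_minus n f g : Expect n (fun xs => f xs - g xs) = Expect n f - Expect n g.
Proof. unfold Rminus. rewrite Expect_plus, Expect_opp; reflexivity. Qed.

Lemma Expect_split t m f :
  Expect (t + m) f = Expect t (fun p => Expect m (fun q => f (p ++ q))).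
Proof.
  revert f; induction t; intros f.
  - rewrite Expect_0; simpl; reflexivity.
  - simpl (S t + m)%nat. rewrite !Expect_S. apply avg4_ext; intro d.
    rewrite IHt. reflexivity.
Qed.

Fixpoint rsum (f : nat -> R) (n : nat) : R :=
  match n with O => 0 | S m => rsum f m + f m end.

Lemma rsum_ext f g n : (forall t, (t < n)%nat -> f t = g t) -> rsum f n = rsum g n.
Proof. induction n; intros H; simpl; [reflexivity|]. rewrite IHn, H; auto; lia. Qed.

Lemma rsum_le f g n : (forall t, (t < n)%nat -> f t <= g t) -> rsum f n <= rsum g n.
Proof. induction n; intros H; simpl; [lra|]. assert (f n <= g n) by (apply H; lia).
  assert (rsum f n <= rsum g n) by (apply IHn; intros; apply H; lia). lra. Qed.

Lemma rsum_const c n : rsum (fun _ => c) n = INR n * c.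
Proof. induction n; simpl rsum; [simpl; ring|]. rewrite IHn, S_INR; ring. Qed.

Lemma rsum_plus f g n : rsum (fun t => f t + g t) n = rsum f n + rsum g n.
Proof. induction n; simpl; [ring|]. rewrite IHn; ring. Qed.

Lemma rsum_scal c f n : rsum (fun t => c * f t) n = c * rsum f n.
Proof. induction n; simpl; [ring|]. rewrite IHn; ring. Qed.

Lemma rsum_shift f n : rsum f (S n) = f 0%nat + rsum (fun t => f (S t)) n.
Proof. induction n; simpl in *; [ring|]. rewrite IHn; ring. Qed.

Lemma rsum_nonneg f n : (forall t, (t < n)%nat -> 0 <= f t) -> 0 <= rsum f n.
Proof. intros H. replace 0 with (rsum (fun _ => 0) n). apply rsum_le; auto.
  rewrite rsum_const; ring. Qed.

Lemma Expect_rsum n F k : Expect n (fun xs => rsum (fun t => F t xs) k) = rsum (fun t => Expect n (F t)) k.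
Proof. induction k; simpl. apply Expect_const. rewrite Expect_plus, IHk; reflexivity. Qed.

Lemma walk_0 z xs : walk z xs 0 = z.
Proof. reflexivity. Qed.

Lemma walk_cons z d xs k : walk z (d :: xs) (S k) = walk (padd z (step d)) xs k.
Proof. reflexivity. Qed.

Lemma walk_firstn z xs t k : (k <= t)%nat -> walk z (firstn t xs) k = walk z xs k.
Proof. intros H; unfold walk. rewrite firstn_firstn. f_equal. f_equal. f_equal. lia. Qed.

Lemma walk_step z xs t : (S t <= length xs)%nat ->
  walk z xs (S t) = padd (walk z xs t) (step (nth t xs 0%nat)).
Proof.
  revert z t; induction xs as [|a xs IH]; intros z t H; simpl in H; [lia|].
  destruct t.
  - reflexivity.
  - rewrite walk_cons. rewrite IH by lia. reflexivity.
Qed.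

Lemma Theta_S z xs t : Theta z xs (S t) = Theta z xs t + phi z xs (S t).
Proof. reflexivity. Qed.

Lemma phi_firstn z xs t k : (k <= t)%nat -> phi z (firstn t xs) k = phi z xs k.
Proof. intros H; unfold phi. rewrite !walk_firstn by lia. reflexivity. Qed.

Lemma Theta_firstn z xs t k : (k <= t)%nat -> Theta z (firstn t xs) k = Theta z xs k.
Proof. induction k; intros H; simpl; [reflexivity|]. rewrite IHk by lia. rewrite phi_firstn by lia. reflexivity. Qed.

Definition P (t : nat) (Psi : pt -> R) (x : pt) : R := Expect t (fun xs => Psi (walk x xs t)).
Definition Q (Psi : pt -> R) (y : pt) : R := avg4 (fun d => Psi (padd y (step d))).

Lemma P_0 Psi x : P 0 Psi x = Psi x.
Proof. unfold P; rewrite Expect_0; reflexivity. Qed.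

Lemma P_S1 t Psi x : P (S t) Psi x = avg4 (fun d => P t Psi (padd x (step d))).
Proof. unfold P; rewrite Expect_S; reflexivity. Qed.

Lemma P_S t Psi x : P (S t) Psi x = P t (Q Psi) x.
Proof.
  revert x; induction t; intros x.
  - rewrite P_S1, P_0. unfold Q. apply avg4_ext; intros; rewrite P_0; reflexivity.
  - rewrite P_S1, (P_S1 t). apply avg4_ext; intros d. rewrite IHt. reflexivity.
Qed.

Lemma P_ext t f g x : (forall y, f y = g y) -> P t f x = P t g x.
Proof. intros H; unfold P; apply Expect_ext; intros; apply H. Qed.
Lemma P_le t f g x : (forall y, f y <= g y) -> P t f x <= P t g x.
Proof. intros H; unfold P; apply Expect_le; intros; apply H. Qed.
Lemma P_plus t f g x : P t (fun y => f y + g y) x = P t f x + P t g x.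
Proof. unfold P; apply Expect_plus. Qed.
Lemma P_minus t f g x : P t (fun y => f y - g y) x = P t f x - P t g x.
Proof. unfold P; apply Expect_minus. Qed.
Lemma P_scal t c f x : P t (fun y => c * f y) x = c * P t f x.
Proof. unfold P; apply Expect_scal. Qed.
Lemma P_const t c x : P t (fun _ => c) x = c.
Proof. unfold P; apply Expect_const. Qed.

Lemma Dynkin n Psi x : P n Psi x = Psi x + rsum (fun t => P t (fun y => Q Psi y - Psi y) x) n.
Proof.
  induction n; simpl rsum. rewrite P_0; ring.
  rewrite P_minus, <- P_S. lra.
Qed.

Lemma Expect_prefix t m (F : list nat -> R) G :
  (forall xs, length xs = (t + m)%nat -> F xs = G (firstn t xs)) ->
  Expect (t + m) F = Expect t G.
Proof.
  intros H. rewrite Expect_split. apply Expect_ext_len; intros p Hp.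
  rewrite <- (Expect_const m (G p)). apply Expect_ext_len; intros q Hq.
  rewrite H by (rewrite length_app; lia).
  rewrite firstn_app, Hp, Nat.sub_diag, firstn_O, app_nil_r.
  rewrite firstn_all2 by lia. reflexivity.
Qed.

Lemma Expect_cond t m (F : list nat -> R) (T : list nat -> nat -> R) :
  (forall xs, length xs = (t + S m)%nat -> F xs = T (firstn t xs) (nth t xs 0%nat)) ->
  Expect (t + S m) F = Expect t (fun p => avg4 (T p)).
Proof.
  intros H. rewrite Expect_split. apply Expect_ext_len; intros p Hp.
  rewrite Expect_S. apply avg4_ext; intros d.
  rewrite <- (Expect_const m (T p d)). apply Expect_ext_len; intros q Hq.
  rewrite H by (rewrite length_app; simpl; lia).
  rewrite firstn_app, Hp, Nat.sub_diag, firstn_O, app_nil_r.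
  rewrite firstn_all2 by lia. rewrite app_nth2 by lia. rewrite Hp, Nat.sub_diag. reflexivity.
Qed.

Lemma Expect_walk_P n t Psi z : (t <= n)%nat ->
  Expect n (fun xs => Psi (walk z xs t)) = P t Psi z.
Proof.
  intros H. replace n with (t + (n - t))%nat by lia. unfold P.
  apply Expect_prefix. intros; rewrite walk_firstn; auto.
Qed.

Definition N2 (y : pt) : R := fst y * fst y + snd y * snd y.

Lemma sq2 : sqrt 2 * sqrt 2 = 2.
Proof. apply sqrt_sqrt; lra. Qed.

Lemma sq2_bounds : 1.41 < sqrt 2 < 1.42.
Proof. pose proof sq2. pose proof (sqrt_pos 2). nra. Qed.

Lemma N2_s0 y : N2 (padd y (step 0)) = N2 y + 2 * sqrt 2 * fst y + 2.
Proof. pose proof sq2. unfold N2, padd, step; simpl. lra. Qed.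
Lemma N2_s1 y : N2 (padd y (step 1)) = N2 y - 2 * sqrt 2 * fst y + 2.
Proof. pose proof sq2. unfold N2, padd, step; simpl. lra. Qed.
Lemma N2_s2 y : N2 (padd y (step 2)) = N2 y + 2 * sqrt 2 * snd y + 2.
Proof. pose proof sq2. unfold N2, padd, step; simpl. lra. Qed.
Lemma N2_s3 y : N2 (padd y (step 3)) = N2 y - 2 * sqrt 2 * snd y + 2.
Proof. pose proof sq2. unfold N2, padd, step; simpl. lra. Qed.

Lemma Q_N2 y : Q N2 y = N2 y + 2.
Proof. unfold Q, avg4; rewrite N2_s0, N2_s1, N2_s2, N2_s3. lra. Qed.

Definition N4 y := N2 y * N2 y.

Lemma Q_N4 y : Q N4 y = N4 y + 8 * N2 y + 4.
Proof. unfold Q, avg4, N4; rewrite N2_s0, N2_s1, N2_s2, N2_s3. pose proof sq2.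
  unfold N2. set (h := sqrt 2) in *. set (a := fst y); set (b := snd y).
  replace ((a*a+b*b + 2*h*a + 2) * (a*a+b*b + 2*h*a + 2) + (a*a+b*b - 2*h*a + 2) * (a*a+b*b - 2*h*a + 2)
   + (a*a+b*b + 2*h*b + 2) * (a*a+b*b + 2*h*b + 2) + (a*a+b*b - 2*h*b + 2) * (a*a+b*b - 2*h*b + 2))
  with (4 * ((a*a+b*b+2)*(a*a+b*b+2)) + 8 * (h*h) * (a*a+b*b)) by ring.
  rewrite H. field. Qed.

Lemma P_N2 n x : P n N2 x = N2 x + 2 * INR n.
Proof. rewrite Dynkin. rewrite (rsum_ext _ (fun _ => 2)). rewrite rsum_const; ring.
  intros t _. rewrite (P_ext _ _ (fun _ => 2)). apply P_const. intros; rewrite Q_N2; ring. Qed.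

Lemma P_N4 n x : P n N4 x <= N4 x + INR n * (8 * N2 x + 16 * INR n + 4).
Proof. rewrite Dynkin. apply Rplus_le_compat_l. rewrite <- rsum_const. apply rsum_le.
  intros t Ht. rewrite (P_ext _ _ (fun y => 8 * N2 y + 4)) by (intros; rewrite Q_N4; ring).
  rewrite P_plus, P_scal, P_N2, P_const. apply lt_INR in Ht. pose proof (pos_INR t). lra. Qed.

Lemma ln_diff A B : 0 < A -> 0 < B -> 1 - A / B <= ln B - ln A.
Proof. intros HA HB. pose proof (exp_ineq1_le (ln (A / B))). rewrite exp_ln in H.
  unfold Rdiv in H. rewrite ln_mult, ln_Rinv in H by (auto; apply Rinv_0_lt_compat; auto).
  unfold Rdiv; lra. apply Rdiv_lt_0_compat; auto. Qed.

Lemma ln_le_lin A B : 0 < A -> 0 < B -> ln B <= ln A + (B - A) / A.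
Proof. intros. pose proof (ln_diff B A H0 H).
  replace ((B - A) / A) with (B / A - 1) by (field; lra). lra. Qed.

Lemma prod4 w a b k : k * k = 8 ->
  (w + k * a) * (w - k * a) * ((w + k * b) * (w - k * b)) = (w*w - 8*(a*a)) * (w*w - 8*(b*b)).
Proof. intros H. replace ((w + k * a) * (w - k * a)) with (w*w - (k*k)*(a*a)) by ring.
  replace ((w + k * b) * (w - k * b)) with (w*w - (k*k)*(b*b)) by ring. rewrite H; ring. Qed.

Definition Lc (c : R) (y : pt) := ln (c + N2 y).

Lemma Q_Lc c y : 1 <= c ->
  let a := fst y in let b := snd y in let w := c + N2 y + 2 in
  Q (Lc c) y = ln ((w*w - 8*(a*a)) * (w*w - 8*(b*b))) / 4 /\
  0 < w*w - 8*(a*a) /\ 0 < w*w - 8*(b*b).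
Proof.
  intros Hc a b w. pose proof sq2 as Hh. 
  assert (Hk : (2*sqrt 2) * (2 * sqrt 2) = 8) by lra.
  assert (HN : N2 y = a*a+b*b) by reflexivity.
  assert (p1: 0 < w*w - 8*(a*a)) by (unfold w; rewrite HN; nra).
  assert (p2: 0 < w*w - 8*(b*b)) by (unfold w; rewrite HN; nra).
  split; [|split; auto].
  unfold Q, avg4, Lc. rewrite N2_s0, N2_s1, N2_s2, N2_s3.
  rewrite <- (prod4 w a b (2 * sqrt 2)) by auto.
  assert (0 < w) by (unfold w; rewrite HN; nra).
  assert (0 < w + 2*sqrt 2 * a /\ 0 < w - 2 * sqrt 2 * a).
  { assert (0 < (w + 2*sqrt 2 * a) * (w - 2 * sqrt 2 * a)) by (replace ((w + 2*sqrt 2 * a) * (w - 2 * sqrt 2 * a)) with (w*w - ((2*sqrt 2)*(2*sqrt 2))*(a*a)) by ring; rewrite Hk; auto).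
    nra. }
  assert (0 < w + 2*sqrt 2 * b /\ 0 < w - 2 * sqrt 2 * b).
  { assert (0 < (w + 2*sqrt 2 * b) * (w - 2 * sqrt 2 * b)) by (replace ((w + 2*sqrt 2 * b) * (w - 2 * sqrt 2 * b)) with (w*w - ((2*sqrt 2)*(2*sqrt 2))*(b*b)) by ring; rewrite Hk; auto).
    nra. }
  rewrite !ln_mult by nra.
  fold a b. rewrite HN. unfold w; rewrite HN.
  replace (c + (a * a + b * b + 2 * sqrt 2 * a + 2)) with (c + (a * a + b * b) + 2 + 2 * sqrt 2 * a) by ring.
  replace (c + (a * a + b * b - 2 * sqrt 2 * a + 2)) with (c + (a * a + b * b) + 2 - 2 * sqrt 2 * a) by ring.
  replace (c + (a * a + b * b + 2 * sqrt 2 * b + 2)) with (c + (a * a + b * b) + 2 + 2 * sqrt 2 * b) by ring.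
  replace (c + (a * a + b * b - 2 * sqrt 2 * b + 2)) with (c + (a * a + b * b) + 2 - 2 * sqrt 2 * b) by ring.
  lra.
Qed.

Lemma ln_le x y : 0 < x -> x <= y -> ln x <= ln y.
Proof. intros H1 H2. destruct H2. left; apply ln_increasing; auto. subst; lra. Qed.

Lemma ln4 x : 0 < x -> ln x = ln (x^4) / 4.
Proof. intros. rewrite ln_pow by auto. simpl INR. field. Qed.

Lemma QF_lb y : 1 / ((N2 y + 4) * (N2 y + 4)) <= Q (Lc 2) y - Lc 2 y.
Proof.
  destruct (Q_Lc 2 y) as [HQ [p1 p2]]; [lra|]. simpl in HQ, p1, p2. rewrite HQ.
  assert (HN : N2 y = fst y * fst y + snd y * snd y) by reflexivity.
  set (a := fst y) in *; set (b := snd y) in *.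
  set (w := 2 + N2 y + 2) in *.
  unfold Lc. rewrite (ln4 (2 + N2 y)) by (rewrite HN; nra).
  set (Pi := (w * w - 8 * (a * a)) * (w * w - 8 * (b * b))).
  set (A := (2 + N2 y)^4).
  assert (HPi : 0 < Pi) by (unfold Pi; nra).
  assert (HA : 0 < A) by (unfold A; rewrite HN; apply pow_lt; nra).
  pose proof (ln_diff A Pi HA HPi).
  assert (Hw : 4 <= w) by (unfold w; rewrite HN; nra).
  assert (E1 : Pi - A = 8*(w*w) + 32*w - 16 + 64*(a*a)*(b*b)).
  { unfold Pi, A, w. rewrite HN. ring. }
  assert (E2 : Pi <= w*w*(w*w) + 64*(a*a)*(b*b)).
  { unfold Pi. assert (0 <= w*w*(a*a+b*b)) by nra. replace ((w * w - 8 * (a * a)) * (w * w - 8 * (b * b))) with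
      (w*w*(w*w) + 64*(a*a)*(b*b) - 8 * (w*w*(a*a+b*b))) by ring. lra. }
  replace (N2 y + 4) with w by (unfold w; ring).
  assert (1 / (w*w) <= (1 - A / Pi) / 4).
  { apply Rmult_le_reg_r with (4 * (w*w) * Pi). assert (0 < w*w) by nra. nra.
    replace (1 / (w*w) * (4 * (w*w) * Pi)) with (4 * Pi) by (field; nra).
    replace ((1 - A / Pi) / 4 * (4 * (w*w) * Pi)) with (w*w*(Pi - A)) by (field; nra).
    rewrite E1. assert (0 <= (a*a)*(b*b)) by nra. assert (16 <= w*w) by nra. nra. }
  lra.
Qed.

Lemma Lc3_pos y : 0 < Lc 3 y.
Proof. unfold Lc. rewrite <- ln_1. apply ln_increasing. lra. unfold N2; nra. Qed.

Lemma QL_ge y : Lc 3 y <= Q (Lc 3) y.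
Proof.
  destruct (Q_Lc 3 y) as [HQ [p1 p2]]; [lra|]. simpl in HQ, p1, p2. rewrite HQ.
  assert (HN : N2 y = fst y * fst y + snd y * snd y) by reflexivity.
  set (a := fst y) in *; set (b := snd y) in *.
  set (w := 3 + N2 y + 2) in *.
  unfold Lc. rewrite (ln4 (3 + N2 y)) by (rewrite HN; nra).
  cut (ln ((3 + N2 y) ^ 4) <= ln ((w * w - 8 * (a * a)) * (w * w - 8 * (b * b)))). lra.
  apply ln_le. apply pow_lt; rewrite HN; nra.
  assert (E1 : (w * w - 8 * (a * a)) * (w * w - 8 * (b * b)) - (3 + N2 y)^4 = 16*(w*w) + 32*w - 16 + 64*(a*a)*(b*b)).
  { unfold w. rewrite HN. ring. }
  assert (0 <= (a*a)*(b*b)) by nra. assert (0 <= w) by (unfold w; rewrite HN; nra). nra.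
Qed.

Lemma lnsq p q : 0 < p -> 0 < q -> ((p - q)/(p + q)) * ((p - q)/(p + q)) <= (ln p - ln q) * (ln p - ln q).
Proof.
  intros Hp Hq. destruct (Rle_dec q p).
  - pose proof (ln_diff q p Hq Hp).
    assert (0 <= (p - q)/(p+q)) by (apply Rmult_le_pos; [lra|left; apply Rinv_0_lt_compat; lra]).
    assert ((p-q)/(p+q) <= 1 - q / p).
    { replace (1 - q/p) with ((p-q)/p) by (field; lra). unfold Rdiv.
      apply Rmult_le_compat_l. lra. apply Rinv_le_contravar; lra. }
    nra.
  - pose proof (ln_diff p q Hp Hq).
    assert (0 <= (q - p)/(p+q)) by (apply Rmult_le_pos; [lra|left; apply Rinv_0_lt_compat; lra]).
    assert ((q-p)/(p+q) <= 1 - p / q).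
    { replace (1 - p/q) with ((q-p)/q) by (field; lra). unfold Rdiv.
      apply Rmult_le_compat_l. lra. apply Rinv_le_contravar; lra. }
    replace ((p - q) / (p + q)) with (- ((q-p)/(p+q))) by (field; lra). nra.
Qed.

Definition L2 y := Lc 3 y * Lc 3 y.

Lemma QL2_lb y : N2 y / ((N2 y + 5) * (N2 y + 5)) <= Q L2 y - L2 y.
Proof.
  pose proof (QL_ge y) as HQL. pose proof (Lc3_pos y) as HL.
  assert (HN : N2 y = fst y * fst y + snd y * snd y) by reflexivity.
  pose proof sq2 as Hh.
  set (L := Lc 3 y) in *.
  unfold Q, avg4, L2 in *. fold L. unfold Lc in *.
  rewrite N2_s0, N2_s1, N2_s2, N2_s3 in *.
  set (a := fst y) in *; set (b := snd y) in *.
  set (w := N2 y + 5).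
  replace (3 + (N2 y + 2 * sqrt 2 * a + 2)) with (w + 2 * sqrt 2 * a) in * by (unfold w; ring).
  replace (3 + (N2 y - 2 * sqrt 2 * a + 2)) with (w - 2 * sqrt 2 * a) in * by (unfold w; ring).
  replace (3 + (N2 y + 2 * sqrt 2 * b + 2)) with (w + 2 * sqrt 2 * b) in * by (unfold w; ring).
  replace (3 + (N2 y - 2 * sqrt 2 * b + 2)) with (w - 2 * sqrt 2 * b) in * by (unfold w; ring).
  assert (Hw : 5 <= w) by (unfold w; rewrite HN; nra).
  assert (Hk : (2*sqrt 2) * (2 * sqrt 2) = 8) by lra.
  assert (Pa: 0 < w + 2*sqrt 2 * a /\ 0 < w - 2 * sqrt 2 * a).
  { assert (0 < (w + 2*sqrt 2 * a) * (w - 2 * sqrt 2 * a)) by (replace ((w + 2*sqrt 2 * a) * (w - 2 * sqrt 2 * a)) with (w*w - ((2*sqrt 2)*(2*sqrt 2))*(a*a)) by ring; rewrite Hk; unfold w; rewrite HN; nra).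
    nra. }
  assert (Pb: 0 < w + 2*sqrt 2 * b /\ 0 < w - 2 * sqrt 2 * b).
  { assert (0 < (w + 2*sqrt 2 * b) * (w - 2 * sqrt 2 * b)) by (replace ((w + 2*sqrt 2 * b) * (w - 2 * sqrt 2 * b)) with (w*w - ((2*sqrt 2)*(2*sqrt 2))*(b*b)) by ring; rewrite Hk; unfold w; rewrite HN; nra).
    nra. }
  pose proof (lnsq _ _ (proj1 Pa) (proj2 Pa)) as Ha.
  pose proof (lnsq _ _ (proj1 Pb) (proj2 Pb)) as Hb.
  replace ((w + 2 * sqrt 2 * a - (w - 2 * sqrt 2 * a)) / (w + 2 * sqrt 2 * a + (w - 2 * sqrt 2 * a))) with
    (2 * sqrt 2 * a / w) in Ha by (field; lra).
  replace ((w + 2 * sqrt 2 * b - (w - 2 * sqrt 2 * b)) / (w + 2 * sqrt 2 * b + (w - 2 * sqrt 2 * b))) with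
    (2 * sqrt 2 * b / w) in Hb by (field; lra).
  replace (2 * sqrt 2 * a / w * (2 * sqrt 2 * a / w)) with ((sqrt 2 * sqrt 2) * 4 * (a*a) / (w*w)) in Ha by (field; lra). rewrite Hh in Ha.
  replace (2 * sqrt 2 * b / w * (2 * sqrt 2 * b / w)) with ((sqrt 2 * sqrt 2) * 4 * (b*b) / (w*w)) in Hb by (field; lra). rewrite Hh in Hb.
  set (l0 := ln (w + 2 * sqrt 2 * a)) in *. set (l1 := ln (w - 2 * sqrt 2 * a)) in *.
  set (l2 := ln (w + 2 * sqrt 2 * b)) in *. set (l3 := ln (w - 2 * sqrt 2 * b)) in *.
  replace (N2 y / (w*w)) with ((2 * 4 * (a*a) / (w*w) + 2 * 4 * (b*b) / (w*w)) / 8) by (rewrite HN; field; lra).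
  assert (E: (l0 * l0 + l1 * l1 + l2 * l2 + l3 * l3) / 4 - L * L =
    ((l0 - L)*(l0-L) + (l1-L)*(l1-L) + (l2-L)*(l2-L) + (l3-L)*(l3-L))/4 + 2 * L * ((l0 + l1 + l2 + l3)/4 - L)) by field.
  rewrite E.
  assert (0 <= 2 * L * ((l0 + l1 + l2 + l3)/4 - L)) by nra.
  assert ((l0 - l1)*(l0-l1) <= 2*((l0 - L)*(l0-L) + (l1-L)*(l1-L))) by (pose proof (Rle_0_sqr (l0 + l1 - 2*L)); unfold Rsqr in *; lra).
  assert ((l2 - l3)*(l2-l3) <= 2*((l2 - L)*(l2-L) + (l3-L)*(l3-L))) by (pose proof (Rle_0_sqr (l2 + l3 - 2*L)); unfold Rsqr in *; lra).
  lra.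
Qed.

Lemma N2_nonneg y : 0 <= N2 y.
Proof. unfold N2; nra. Qed.

Lemma P_affine n al be x : P n (fun y => al + be * N2 y) x = al + be * (N2 x + 2 * INR n).
Proof. rewrite P_plus, P_const, P_scal, P_N2. reflexivity. Qed.

Lemma PF_bound n x : P n (Lc 2) x - Lc 2 x <= ln (1 + INR n).
Proof.
  set (m := N2 x + 2 * INR n). pose proof (pos_INR n). pose proof (N2_nonneg x).
  assert (Hm : m = N2 x + 2 * INR n) by reflexivity. clearbody m.
  assert (H1 : P n (Lc 2) x <= ln (2 + m)).
  { eapply Rle_trans. apply (P_le n _ (fun y => (ln (2 + m) - (2 + m)/(2+m)) + (1/(2+m)) * (2 + N2 y) )).
    intros y. unfold Lc. pose proof (ln_le_lin (2 + m) (2 + N2 y)) as Hll. pose proof (N2_nonneg y).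
    subst m. assert (Hp: 0 < 2 + (N2 x + 2 * INR n)) by lra.
    replace ((2 + N2 y - (2 + (N2 x + 2 * INR n))) / (2 + (N2 x + 2 * INR n))) with
      (- ((2 + (N2 x + 2 * INR n)) / (2 + (N2 x + 2 * INR n))) + 1 / (2 + (N2 x + 2 * INR n)) * (2 + N2 y)) in Hll by (field; lra).
    lra.
    rewrite P_plus, P_const, P_scal. rewrite P_plus, P_const, P_N2. rewrite <- Hm.
    assert (0 < 2 + m) by lra.     replace ((2 + m) / (2 + m)) with 1 by (field; lra).
    replace (1 / (2 + m) * (2 + m)) with 1 by (field; lra). lra. }
  change (Lc 2 x) with (ln (2 + N2 x)). 
  assert (ln (2 + m) <= ln (2 + N2 x) + ln (1 + INR n)).
  { rewrite <- ln_mult by lra. apply ln_le. lra. rewrite Hm; nra. }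
  lra.
Qed.

Lemma PL2_bound n x : let l := ln (1 + 2 * INR n) in
  P n L2 x - L2 x <= 5 * (l * l) + 10.
Proof.
  intros l. pose proof (pos_INR n) as Hn. pose proof (N2_nonneg x) as HNx.
  assert (Hl : l = ln (1 + 2 * INR n)) by reflexivity. clearbody l.
  set (m := N2 x + 2 * INR n). assert (Hm : m = N2 x + 2 * INR n) by reflexivity. clearbody m.
  set (A := ln (3 + m)). assert (HA : A = ln (3 + m)) by reflexivity. clearbody A.
  assert (HA0 : 0 < A) by (rewrite HA; rewrite <- ln_1; apply ln_increasing; lra).
  set (c := 3 + m). assert (Hcd : c = 3 + m) by reflexivity. clearbody c.
  assert (Hc : 0 < c) by lra.
  assert (H1 : P n L2 x <= A * A + 6).
  { eapply Rle_trans.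
    apply (P_le n _ (fun y => (A - m / c) * (A - m / c) + (2 * (A - m/c) / c) * N2 y + (1/(c*c)) * N4 y)).
    - intros y. unfold L2. pose proof (Lc3_pos y). 
      assert (Lc 3 y <= A + (N2 y - m) / c).
      { unfold Lc. rewrite HA, Hcd. pose proof (ln_le_lin (3 + m) (3 + N2 y)) as Hll. pose proof (N2_nonneg y).
        replace (3 + N2 y - (3 + m)) with (N2 y - m) in Hll by ring. apply Hll; lra. }
      assert (E : (A - m / c) * (A - m / c) + 2 * (A - m / c) / c * N2 y + 1 / (c * c) * N4 y
                 = (A + (N2 y - m)/c) * (A + (N2 y - m)/c)) by (unfold N4; field; lra).
      rewrite E. nra.
    - rewrite !P_plus, P_const, !P_scal, P_N2.
      assert (HP4 := P_N4 n x).
      assert (E : (A - m / c) * (A - m / c) + 2 * (A - m / c) / c * (N2 x + 2 * INR n) + 1 / (c * c) * P n N4 x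
        = A * A + (P n N4 x - m * m) / (c * c)) by (rewrite <- Hm; field; lra).
      rewrite E.
      assert ((P n N4 x - m * m) / (c*c) <= 6).
      { apply Rmult_le_reg_r with (c*c). nra. unfold Rdiv. rewrite Rmult_assoc, Rinv_l by nra.
        unfold N4 in *. subst c m. nra. }
      lra. }
  set (v := 3 + N2 x). assert (Hvd : v = 3 + N2 x) by reflexivity. clearbody v.
  set (L := ln v). assert (HLd : L = ln v) by reflexivity. clearbody L.
  assert (HL2 : L2 x = L * L) by (unfold L2, Lc; rewrite HLd, Hvd; reflexivity).
  assert (Hv : 1 <= v) by lra.
  assert (HL0 : 0 <= L) by (rewrite HLd, <- ln_1; apply ln_le; lra).
  assert (HAL : L <= A) by (rewrite HLd, HA; apply ln_le; lra).
  assert (Hl0 : 0 <= l) by (rewrite Hl, <- ln_1; apply ln_le; lra).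
  assert (HAl : A <= L + l).
  { rewrite HA, HLd, Hl. rewrite <- ln_mult by lra. apply ln_le. lra. nra. }
  assert (H2 : 2 * L * (A - L) <= 4 * (l * l) + 4).
  { destruct (Rle_dec v ((1 + 2 * INR n) * (1 + 2 * INR n))).
    - assert (L <= 2 * l).
      { rewrite HLd, Hl. replace (2 * ln (1 + 2 * INR n)) with (ln (1 + 2 * INR n) + ln (1 + 2 * INR n)) by ring.
        rewrite <- ln_mult by lra. apply ln_le; lra. }
      nra.
    - assert (HAL2 : A - L <= 2 * INR n / v).
      { rewrite HA, HLd. pose proof (ln_le_lin v (3 + m)) as Hll.
        replace (3 + m - v) with (2 * INR n) in Hll by lra. lra. }
      assert (Hsv : 1 + 2 * INR n < sqrt v).
      { apply Rnot_le_lt; intro Hs. apply n0. rewrite <- (sqrt_sqrt v) by lra.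
        apply Rmult_le_compat; try lra; apply sqrt_pos. }
      assert (HLs : L <= 2 * sqrt v).
      { rewrite HLd. rewrite <- (sqrt_sqrt v) at 1 by lra. rewrite ln_mult by lra.
        pose proof (exp_ineq1_le (ln (sqrt v))). rewrite exp_ln in H by lra. lra. }
      assert (Hsv2 : sqrt v * sqrt v = v) by (apply sqrt_sqrt; lra).
      assert (2 * L * (A - L) <= 2 * (2 * sqrt v) * (2 * INR n / v)).
      { apply Rmult_le_compat; nra. }
      assert (2 * (2 * sqrt v) * (2 * INR n / v) <= 4).
      { assert (Hsp: 0 < sqrt v) by lra. set (s := sqrt v) in *. clearbody s. rewrite <- Hsv2.
        replace (2 * (2 * s) * (2 * INR n / (s*s))) with (8 * INR n / s) by (field; lra).
        apply Rmult_le_reg_r with s. lra. unfold Rdiv. rewrite Rmult_assoc, Rinv_l by lra. lra. }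
      nra. }
  rewrite HL2. nra.
Qed.

Lemma N2_nonneg' y : 0 <= N2 y.
Proof. apply N2_nonneg. Qed.

Definition dot (u v : pt) : R := fst u * fst v + snd u * snd v.

Definition ang (u v : pt) : R :=
  match Req_EM_T (cross u v) 0 with
  | left _ => 0
  | right _ => epsilon (inhabits 0)
                 (fun t => -PI < t < PI /\ rot t (cunit u) = cunit v)
  end.

Lemma phi_ang z xs t : phi z xs (S t) = ang (walk z xs t) (walk z xs (S t)).
Proof. unfold phi, ang. replace (S t - 1)%nat with t by lia. reflexivity. Qed.

Lemma cnorm_sq u : cnorm u * cnorm u = N2 u.
Proof. unfold cnorm, N2. rewrite sqrt_sqrt by nra. ring. Qed.

Lemma cnorm_pos u : 0 < N2 u -> 0 < cnorm u.
Proof. intros. unfold cnorm. apply sqrt_lt_R0. unfold N2 in H. nra. Qed.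

Lemma cross_nz_N2 u v : cross u v <> 0 -> 0 < N2 u /\ 0 < N2 v.
Proof.
  intros H. unfold N2, cross in *. destruct u as [a b]; destruct v as [c d]; simpl in *.
  split.
  - destruct (Rlt_dec 0 (a*a+b*b)); auto. exfalso. assert (a = 0) by nra. assert (b = 0) by nra. subst. apply H; ring.
  - destruct (Rlt_dec 0 (c*c+d*d)); auto. exfalso. assert (c = 0) by nra. assert (d = 0) by nra. subst. apply H; ring.
Qed.

Lemma ang_spec u v : cross u v <> 0 ->
  -PI < ang u v < PI /\ cos (ang u v) * (cnorm u * cnorm v) = dot u v /\
  sin (ang u v) * (cnorm u * cnorm v) = cross u v.
Proof.
  intros Hc. destruct (cross_nz_N2 u v Hc) as [Hu Hv].
  pose proof (cnorm_pos u Hu) as Pu. pose proof (cnorm_pos v Hv) as Pv.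
  pose proof (cnorm_sq u) as Su. pose proof (cnorm_sq v) as Sv.
  set (nu := cnorm u) in *. set (nv := cnorm v) in *.
  destruct u as [u1 u2]; destruct v as [v1 v2]. unfold N2, cross, dot in *; simpl in *.
  set (p1 := u1 / nu). set (p2 := u2 / nu). set (q1 := v1 / nv). set (q2 := v2 / nv).
  assert (Hp : p1 * p1 + p2 * p2 = 1) by (unfold p1, p2; replace (u1 / nu * (u1 / nu) + u2 / nu * (u2 / nu)) with ((u1*u1+u2*u2)/(nu*nu)) by (field; lra); rewrite <- Su; field; lra).
  assert (Hq : q1 * q1 + q2 * q2 = 1) by (unfold q1, q2; replace (v1 / nv * (v1 / nv) + v2 / nv * (v2 / nv)) with ((v1*v1+v2*v2)/(nv*nv)) by (field; lra); rewrite <- Sv; field; lra).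
  set (c := p1 * q1 + p2 * q2). set (s := p1 * q2 - p2 * q1).
  assert (Hcs : c * c + s * s = 1).
  { unfold c, s. replace ((p1 * q1 + p2 * q2) * (p1 * q1 + p2 * q2) + (p1 * q2 - p2 * q1) * (p1 * q2 - p2 * q1))
     with ((p1 * p1 + p2 * p2) * (q1 * q1 + q2 * q2)) by ring. rewrite Hp, Hq; ring. }
  assert (Hs : s <> 0).
  { unfold s, p1, p2, q1, q2. intro E. apply Hc. 
    replace (u1 * v2 - u2 * v1) with ((u1 / nu * (v2 / nv) - u2 / nu * (v1 / nv)) * (nu * nv)) by (field; lra).
    rewrite E; ring. }
  assert (Hunit : cunit (u1, u2) = (p1, p2)) by reflexivity.
  assert (Hunitv : cunit (v1, v2) = (q1, q2)) by reflexivity.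
  assert (Char : forall t, rot t (p1, p2) = (q1, q2) -> cos t = c /\ sin t = s).
  { intros t Ht. unfold rot in Ht; simpl in Ht. injection Ht as E1 E2.
    unfold c, s. rewrite <- E1, <- E2. split.
    - replace (p1 * (cos t * p1 - sin t * p2) + p2 * (sin t * p1 + cos t * p2)) with (cos t * (p1 * p1 + p2 * p2)) by ring.
      rewrite Hp; ring.
    - replace (p1 * (sin t * p1 + cos t * p2) - p2 * (cos t * p1 - sin t * p2)) with (sin t * (p1 * p1 + p2 * p2)) by ring.
      rewrite Hp; ring. }
  assert (Ex : exists t, -PI < t < PI /\ rot t (cunit (u1, u2)) = cunit (v1, v2)).
  { rewrite Hunit, Hunitv.
    assert (Hc1 : -1 <= c <= 1) by nra.
    pose proof (acos_bound c) as Hb. pose proof (cos_acos c Hc1) as Hcos. pose proof (sin_acos c Hc1) as Hsin.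
    replace (1 - c²) with (s²) in Hsin by (unfold Rsqr; lra). rewrite sqrt_Rsqr_abs in Hsin.
    assert (0 < acos c < PI).
    { destruct Hb as [Hb1 Hb2]. split.
      - destruct Hb1 as [|E]; auto. rewrite <- E, sin_0 in Hsin. exfalso. apply Hs. 
        destruct (Rcase_abs s); [rewrite Rabs_left in Hsin by auto|rewrite Rabs_right in Hsin by auto]; lra.
      - destruct Hb2 as [|E]; auto. rewrite E, sin_PI in Hsin. exfalso. apply Hs. 
        destruct (Rcase_abs s); [rewrite Rabs_left in Hsin by auto|rewrite Rabs_right in Hsin by auto]; lra. }
    assert (Rot : forall t, cos t = c -> sin t = s -> rot t (p1, p2) = (q1, q2)).
    { intros t E1 E2. unfold rot; simpl. rewrite E1, E2. unfold c, s. f_equal.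
      - replace ((p1 * q1 + p2 * q2) * p1 - (p1 * q2 - p2 * q1) * p2) with (q1 * (p1 * p1 + p2 * p2)) by ring. rewrite Hp; ring.
      - replace ((p1 * q2 - p2 * q1) * p1 + (p1 * q1 + p2 * q2) * p2) with (q2 * (p1 * p1 + p2 * p2)) by ring. rewrite Hp; ring. }
    destruct (Rcase_abs s).
    - exists (- acos c). split. lra. apply Rot. rewrite cos_neg; auto. rewrite sin_neg, Hsin, Rabs_left; auto; ring.
    - exists (acos c). split. lra. apply Rot. auto. rewrite Hsin, Rabs_right; auto. }
  unfold ang. destruct (Req_EM_T _ 0) as [E|E]; [simpl in E; contradiction|].
  pose proof (epsilon_spec (inhabits 0) _ Ex) as [Hr Hrot].
  set (t := epsilon (inhabits 0) (fun t => -PI < t < PI /\ rot t (cunit (u1, u2)) = cunit (v1, v2))) in *.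
  rewrite Hunit, Hunitv in Hrot. destruct (Char t Hrot) as [E1 E2].
  split; auto. rewrite E1, E2. unfold c, s, p1, p2, q1, q2. split; field; lra.
Qed.

Lemma PI_gt_2 : 2 < PI.
Proof. pose proof PI2_1. lra. Qed.

Lemma sin_lb_cubic t : 0 <= t <= 1 -> t - t^3/6 <= sin t.
Proof.
  intros H. pose proof PI2_1. destruct (SIN t) as [H1 _]; try lra.
  eapply Rle_trans; [|apply H1]. unfold sin_lb, sin_approx, sin_term. simpl.
  assert (0 <= t*t) by nra. assert (t*t <= 1) by nra.
  assert (0 <= t * (t * (t * (t * (t * 1))))) by (apply Rmult_le_pos; try lra; nra).
  nra.
Qed.

Lemma trig2 t : t * t <= 1 -> t * t <= 36/25 * (sin t * sin t).
Proof.
  intros H. destruct (Rle_dec 0 t).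
  - assert (t <= 1) by nra. pose proof (sin_lb_cubic t (conj r H0)).
    assert (t^3 <= t) by (simpl; nra). assert (5/6 * t <= sin t) by lra.
    assert (0 <= sin t - 5/6*t) by lra. assert (0 <= sin t + 5/6*t) by lra.
    assert (0 <= (sin t - 5/6*t)*(sin t + 5/6*t)) by (apply Rmult_le_pos; lra). nra.
  - assert (Hu1 : -t <= 1) by nra. assert (Hu0 : 0 <= -t) by lra.
    pose proof (sin_lb_cubic (-t) (conj Hu0 Hu1)) as Hs. rewrite sin_neg in Hs.
    assert ((-t)^3 <= -t) by (simpl; nra). assert (5/6 * (-t) <= - sin t) by lra.
    assert (0 <= (- sin t - 5/6*(-t))*(- sin t + 5/6*(-t))) by (apply Rmult_le_pos; lra). nra.
Qed.

Lemma sin_quarter : 1/5 < sin (1/4).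
Proof. pose proof (sin_lb_cubic (1/4)). lra. Qed.

Lemma trig1 t : - (PI/2) < t < PI/2 -> sin t * sin t <= 1/25 -> t * t <= 1/16.
Proof.
  intros H Hs. pose proof sin_quarter. pose proof PI2_1.
  destruct (Rle_dec t (1/4)); destruct (Rle_dec (-(1/4)) t); try nra.
  - exfalso. assert (sin t < sin (-(1/4))) by (apply sin_increasing_1; lra).
    rewrite sin_neg in H2. nra.
  - exfalso. assert (sin (1/4) < sin t) by (apply sin_increasing_1; lra). nra.
Qed.

Lemma ang_zero u v : cross u v = 0 -> ang u v = 0.
Proof. intros H. unfold ang. destruct (Req_EM_T _ 0); [reflexivity|contradiction]. Qed.

Lemma ang_bound u v : ang u v * ang u v <= 16.
Proof.
  destruct (Req_dec (cross u v) 0) as [E|E].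
  - rewrite ang_zero by auto. lra.
  - destruct (ang_spec u v E) as [H _]. pose proof PI_4. pose proof PI_RGT_0. nra.
Qed.

Lemma lagrange u v : dot u v * dot u v + cross u v * cross u v = N2 u * N2 v.
Proof. unfold dot, cross, N2; ring. Qed.

Lemma ang_good u v : 0 < N2 u -> 0 < dot u v ->
  - (PI/2) < ang u v < PI/2 /\ cos (ang u v) * (cnorm u * cnorm v) = dot u v /\
  sin (ang u v) * (cnorm u * cnorm v) = cross u v.
Proof.
  intros Hu Hd.
  assert (Hv : 0 < N2 v).
  { destruct (Rlt_dec 0 (N2 v)); auto. exfalso. unfold N2, dot in *.
    assert (fst v = 0) by nra. assert (snd v = 0) by nra. rewrite H, H0 in Hd. lra. }
  pose proof (cnorm_pos u Hu). pose proof (cnorm_pos v Hv). pose proof (cnorm_sq u). pose proof (cnorm_sq v).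
  destruct (Req_dec (cross u v) 0) as [E|E].
  - rewrite ang_zero by auto. rewrite cos_0, sin_0. pose proof PI_RGT_0.
    pose proof (lagrange u v) as Hl. rewrite E in Hl.
    assert (cnorm u * cnorm v = dot u v).
    { assert ((cnorm u * cnorm v) * (cnorm u * cnorm v) = dot u v * dot u v) by nra.
      assert (0 < cnorm u * cnorm v) by nra. nra. }
    repeat split; try lra.
  - destruct (ang_spec u v E) as [Hr [Hc Hs]]. assert (Hnn : 0 < cnorm u * cnorm v) by nra.
    set (nn := cnorm u * cnorm v) in *. clearbody nn. repeat split; auto.
    + destruct (Rlt_dec (- (PI/2)) (ang u v)); auto. exfalso.
      assert (cos (ang u v) <= 0). { rewrite cos_sym. apply cos_le_0; lra. }
      nra.
    + destruct (Rlt_dec (ang u v) (PI/2)); auto. exfalso.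
      assert (cos (ang u v) <= 0). { apply cos_le_0; lra. }
      nra.
Qed.

Lemma step_facts y d : let e := step d in
  N2 e = 2 /\ N2 (padd y e) = N2 y + 2 * dot y e + 2 /\ dot y (padd y e) = N2 y + dot y e /\
  cross y (padd y e) = cross y e.
Proof.
  intros e. pose proof sq2. assert (N2 e = 2).
  { unfold e. destruct d as [|[|[|d]]]; unfold N2, step; simpl; lra. }
  repeat split; auto.
  - unfold N2, dot, padd in *; simpl. lra.
  - unfold dot, N2, padd; simpl; ring.
  - unfold cross, padd; simpl; ring.
Qed.

Lemma step_ang y d : 100 <= N2 y ->
  let v := padd y (step d) in let t := ang y v in
  0 < dot y v /\ N2 y / 2 <= N2 v /\ t * t <= 1/16 /\ t * t <= 6 / N2 y /\
  cos t * (cnorm y * cnorm v) = dot y v /\ sin t * (cnorm y * cnorm v) = cross y v.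
Proof.
  intros HN v t. destruct (step_facts y d) as [He [Hv [Hd Hc]]]. fold v in Hv, Hd, Hc.
  set (e := step d) in *.
  pose proof (lagrange y e) as Hl. rewrite He in Hl.
  set (de := dot y e) in *. set (ce := cross y e) in *.
  assert (de * de <= 2 * N2 y) by nra.
  assert (Hdp : 0 < dot y v) by (rewrite Hd; nra).
  assert (HNv : N2 y / 2 <= N2 v) by (rewrite Hv; nra).
  destruct (ang_good y v) as [Hr [Hcos Hsin]]; try lra.
  fold t in Hr, Hcos, Hsin.
  pose proof (cnorm_sq y). pose proof (cnorm_sq v).
  assert (Hs2 : sin t * sin t * (N2 y * N2 v) = ce * ce).
  { rewrite <- Hc. rewrite <- Hsin. rewrite <- H0, <- H1. ring. }
  assert (Hs3 : sin t * sin t <= 4 / N2 y).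
  { apply Rmult_le_reg_r with (N2 y * N2 v). nra. rewrite Hs2.
    unfold Rdiv. replace (4 * / N2 y * (N2 y * N2 v)) with (4 * N2 v) by (field; lra). nra. }
  assert (4 / N2 y <= 1/25). { apply Rmult_le_reg_r with (N2 y). lra. unfold Rdiv.
    rewrite Rmult_assoc, Rinv_l by lra. lra. }
  assert (Ht : t * t <= 1/16) by (apply trig1; lra).
  repeat split; auto.
  pose proof (trig2 t ltac:(lra)).
  assert (36/25 * (4 / N2 y) <= 6 / N2 y). { unfold Rdiv. assert (0 < / N2 y) by (apply Rinv_0_lt_compat; lra). nra. }
  nra.
Qed.

Definition Dr (y : pt) : R := avg4 (fun d => ang y (padd y (step d))).
Definition Q2 (y : pt) : R := avg4 (fun d => ang y (padd y (step d)) * ang y (padd y (step d))).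

Lemma im_identity N a b h :
  let C0 := N + h * a in let S0 := - (h * b) in
  let C1 := N - h * a in let S1 := h * b in
  let C2 := N + h * b in let S2 := h * a in
  let C3 := N - h * b in let S3 := - (h * a) in
  let C01 := C0 * C1 - S0 * S1 in let S01 := S0 * C1 + C0 * S1 in
  let C012 := C01 * C2 - S01 * S2 in let S012 := S01 * C2 + C01 * S2 in
  S012 * C3 + C012 * S3 = (h*h)*(h*h) * (4 * a^3 * b - 4 * a * b^3).
Proof. cbv zeta. ring. Qed.

Lemma drift_far y : 100 <= N2 y -> Dr y * Dr y <= 24 / (N2 y * N2 y * (N2 y * N2 y)).
Proof.
  intros HN.
  destruct (step_ang y 0 HN) as [_ [Hv0 [Ht0 [_ [Hc0 Hs0]]]]].
  destruct (step_ang y 1 HN) as [_ [Hv1 [Ht1 [_ [Hc1 Hs1]]]]].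
  destruct (step_ang y 2 HN) as [_ [Hv2 [Ht2 [_ [Hc2 Hs2]]]]].
  destruct (step_ang y 3 HN) as [_ [Hv3 [Ht3 [_ [Hc3 Hs3]]]]].
  unfold Dr, avg4.
  set (v0 := padd y (step 0)) in *. set (v1 := padd y (step 1)) in *.
  set (v2 := padd y (step 2)) in *. set (v3 := padd y (step 3)) in *.
  set (t0 := ang y v0) in *. set (t1 := ang y v1) in *. set (t2 := ang y v2) in *. set (t3 := ang y v3) in *.
  set (T := t0 + t1 + t2 + t3).
  assert (HT : T * T <= 1).
  { assert (-1/4 <= t0 <= 1/4) by nra. assert (-1/4 <= t1 <= 1/4) by nra.
    assert (-1/4 <= t2 <= 1/4) by nra. assert (-1/4 <= t3 <= 1/4) by nra.
    assert (-1 <= T <= 1) by (unfold T; lra). nra. }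
  pose proof (trig2 T HT) as HT2.
  pose proof (cnorm_sq y) as Sy.
  pose proof (cnorm_sq v0) as S0. pose proof (cnorm_sq v1) as S1.
  pose proof (cnorm_sq v2) as S2. pose proof (cnorm_sq v3) as S3.
  set (ny := cnorm y) in *. set (m0 := cnorm v0) in *. set (m1 := cnorm v1) in *.
  set (m2 := cnorm v2) in *. set (m3 := cnorm v3) in *.
  assert (Hprod : sin T * ((ny * m0) * (ny * m1) * (ny * m2) * (ny * m3)) =
     ((sqrt 2 * sqrt 2) * (sqrt 2 * sqrt 2)) * (4 * (fst y)^3 * snd y - 4 * fst y * (snd y)^3)).
  { pose proof (im_identity (N2 y) (fst y) (snd y) (sqrt 2)) as Im. cbv zeta in Im.
    rewrite <- Im.
    assert (E0 : dot y v0 = N2 y + sqrt 2 * fst y) by (unfold dot, v0, N2, padd, step; simpl; ring).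
    assert (E1 : dot y v1 = N2 y - sqrt 2 * fst y) by (unfold dot, v1, N2, padd, step; simpl; ring).
    assert (E2 : dot y v2 = N2 y + sqrt 2 * snd y) by (unfold dot, v2, N2, padd, step; simpl; ring).
    assert (E3 : dot y v3 = N2 y - sqrt 2 * snd y) by (unfold dot, v3, N2, padd, step; simpl; ring).
    assert (F0 : cross y v0 = - (sqrt 2 * snd y)) by (unfold cross, v0, padd, step; simpl; ring).
    assert (F1 : cross y v1 = sqrt 2 * snd y) by (unfold cross, v1, padd, step; simpl; ring).
    assert (F2 : cross y v2 = sqrt 2 * fst y) by (unfold cross, v2, padd, step; simpl; ring).
    assert (F3 : cross y v3 = - (sqrt 2 * fst y)) by (unfold cross, v3, padd, step; simpl; ring).
    assert (Hexp : sin T * ((ny * m0) * (ny * m1) * (ny * m2) * (ny * m3)) = (((sin t0 * (ny * m0)) * (cos t1 * (ny * m1)) + (cos t0 * (ny * m0)) * (sin t1 * (ny * m1))) * (cos t2 * (ny * m2)) + ((cos t0 * (ny * m0)) * (cos t1 * (ny * m1)) - (sin t0 * (ny * m0)) * (sin t1 * (ny * m1))) * (sin t2 * (ny * m2))) * (cos t3 * (ny * m3)) + (((cos t0 * (ny * m0)) * (cos t1 * (ny * m1)) - (sin t0 * (ny * m0)) * (sin t1 * (ny * m1))) * (cos t2 * (ny * m2)) - ((sin t0 * (ny * m0)) * (cos t1 * (ny * m1)) + (cos t0 * (ny * m0)) * (sin t1 * (ny * m1))) * (sin t2 * (ny * m2))) * (sin t3 * (ny * m3)))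
      by (unfold T; repeat (rewrite sin_plus || rewrite cos_plus); ring).
    rewrite Hexp, Hc0, Hc1, Hc2, Hc3, Hs0, Hs1, Hs2, Hs3, E0, E1, E2, E3, F0, F1, F2, F3. reflexivity. }
  rewrite sq2 in Hprod.
  set (ab := 4 * fst y ^ 3 * snd y - 4 * fst y * snd y ^ 3) in *.
  assert (Hab : ab * ab <= N2 y * N2 y * (N2 y * N2 y)).
  { assert (ab * ab + (fst y^4 - 6 * (fst y)^2 * (snd y)^2 + snd y ^4) * (fst y^4 - 6 * (fst y)^2 * (snd y)^2 + snd y ^4)
       = N2 y * N2 y * (N2 y * N2 y)) by (unfold ab, N2; ring). match goal with H : ab*ab + ?R * ?R = _ |- _ => pose proof (Rle_0_sqr R); unfold Rsqr in *; lra end. }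
  set (N := N2 y) in *.
  assert (Hpp : ((ny * m0) * (ny * m1) * (ny * m2) * (ny * m3)) * ((ny * m0) * (ny * m1) * (ny * m2) * (ny * m3))
     = (N * N * (N * N)) * (N2 v0 * N2 v1 * (N2 v2 * N2 v3))) by (rewrite <- Sy, <- S0, <- S1, <- S2, <- S3; ring).
  assert (Hlow : N/2 * (N/2) * (N/2 * (N/2)) <= N2 v0 * N2 v1 * (N2 v2 * N2 v3)).
  { assert (0 <= N/2) by lra.
    apply Rmult_le_compat; try (apply Rmult_le_pos; lra); apply Rmult_le_compat; lra. }
  set (PP := N2 v0 * N2 v1 * (N2 v2 * N2 v3)) in *.
  set (N4 := N * N * (N * N)) in *.
  assert (HN4 : 100 * 100 * (100 * 100) <= N4).
  { unfold N4. assert (100 * 100 <= N * N) by nra. nra. }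
  assert (Hsin2 : sin T * sin T * (N4 * PP) = 16 * (ab * ab)).
  { rewrite <- Hpp. replace (sin T * sin T * (((ny * m0) * (ny * m1) * (ny * m2) * (ny * m3)) * ((ny * m0) * (ny * m1) * (ny * m2) * (ny * m3))))
      with ((sin T * ((ny * m0) * (ny * m1) * (ny * m2) * (ny * m3))) * (sin T * ((ny * m0) * (ny * m1) * (ny * m2) * (ny * m3)))) by ring.
    rewrite Hprod. ring. }
  assert (HPP : N4 / 16 <= PP) by (unfold N4 in *; lra).
  assert (Hs : sin T * sin T <= 256 / N4).
  { apply Rmult_le_reg_r with (N4 * PP). nra. rewrite Hsin2.
    replace (256 / N4 * (N4 * PP)) with (256 * PP) by (field; lra). nra. }
  replace ((t0 + t1 + t2 + t3) / 4) with (T / 4) by (unfold T; lra).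
  assert (T * T <= 36/25 * (256 / N4)) by nra.
  replace (T / 4 * (T / 4)) with (T * T / 16) by field.
  replace (24 / N4) with (36 / 25 * (256 / N4) / 16 * (24 * 16 * 25 / (36 * 256))) by (field; lra).
  assert (0 <= 36 / 25 * (256 / N4)). { apply Rmult_le_pos. lra. apply Rmult_le_pos. lra. left; apply Rinv_0_lt_compat; lra. }
  lra.
Qed.

Lemma abs_le_sq D K : 0 <= K -> D * D <= K * K -> Rabs D <= K.
Proof. intros. destruct (Rcase_abs D); [rewrite Rabs_left by auto|rewrite Rabs_right by auto]; nra. Qed.

Lemma g_lb y : 1 / ((N2 y + 4) * (N2 y + 4)) <= Q (Lc 2) y - Lc 2 y.
Proof. apply QF_lb. Qed.

Lemma inv_sq_lb y : N2 y < 100 -> 1 / 10816 <= 1 / ((N2 y + 4) * (N2 y + 4)).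
Proof. intros. pose proof (N2_nonneg' y). apply Rmult_le_reg_r with (10816 * ((N2 y + 4) * (N2 y + 4))). nra.
  replace (1 / 10816 * (10816 * ((N2 y + 4) * (N2 y + 4)))) with ((N2 y + 4) * (N2 y + 4)) by field.
  replace (1 / ((N2 y + 4) * (N2 y + 4)) * (10816 * ((N2 y + 4) * (N2 y + 4)))) with 10816 by (field; nra). nra.
Qed.

Lemma Dr_bound y : Rabs (Dr y) <= 50000 * (Q (Lc 2) y - Lc 2 y).
Proof.
  pose proof (g_lb y) as Hg. pose proof (N2_nonneg' y) as HN.
  destruct (Rle_dec 100 (N2 y)).
  - pose proof (drift_far y r) as Hd.
    set (N := N2 y) in *. assert (HNN : 0 < N * N) by nra. assert (HNNNN : 0 < N * N * (N * N)) by (apply Rmult_lt_0_compat; lra).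
    assert (Hk : Rabs (Dr y) <= 5 / (N * N)).
    { apply abs_le_sq. apply Rmult_le_pos. lra. left; apply Rinv_0_lt_compat; lra.
      replace (5 / (N * N) * (5 / (N * N))) with (25 / (N * N * (N * N))) by (field; lra).
      assert (24 / (N * N * (N * N)) <= 25 / (N * N * (N * N))).
      { unfold Rdiv. apply Rmult_le_compat_r. left; apply Rinv_0_lt_compat; lra. lra. }
      lra. }
    assert (5 / (N * N) <= 50000 * (1 / ((N + 4) * (N + 4)))).
    { apply Rmult_le_reg_r with ((N*N) * ((N + 4) * (N + 4))). nra.
      replace (5 / (N * N) * (N * N * ((N + 4) * (N + 4)))) with (5 * ((N + 4) * (N + 4))) by (field; lra).
      replace (50000 * (1 / ((N + 4) * (N + 4))) * (N * N * ((N + 4) * (N + 4)))) with (50000 * (N*N)) by (field; nra).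
      nra. }
    lra.
  - assert (Rabs (Dr y) <= 4).
    { unfold Dr, avg4. apply abs_le_sq. lra.
      pose proof (ang_bound y (padd y (step 0))). pose proof (ang_bound y (padd y (step 1))).
      pose proof (ang_bound y (padd y (step 2))). pose proof (ang_bound y (padd y (step 3))).
      set (a0 := ang y (padd y (step 0))) in *. set (a1 := ang y (padd y (step 1))) in *.
      set (a2 := ang y (padd y (step 2))) in *. set (a3 := ang y (padd y (step 3))) in *.
      assert (-4 <= a0 <= 4) by nra. assert (-4 <= a1 <= 4) by nra.
      assert (-4 <= a2 <= 4) by nra. assert (-4 <= a3 <= 4) by nra.
      assert (-4 <= (a0 + a1 + a2 + a3)/4 <= 4) by lra. nra. }
    pose proof (inv_sq_lb y ltac:(lra)). lra.
Qed.

Lemma Q2_bound y : Q2 y <= 24 * (Q L2 y - L2 y) + 200000 * (Q (Lc 2) y - Lc 2 y).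
Proof.
  pose proof (g_lb y) as Hg. pose proof (N2_nonneg' y) as HN. pose proof (QL2_lb y) as HL.
  assert (0 <= 1 / ((N2 y + 4) * (N2 y + 4))) by (apply Rmult_le_pos; [lra| left; apply Rinv_0_lt_compat; nra]).
  assert (0 <= N2 y / ((N2 y + 5) * (N2 y + 5))) by (apply Rmult_le_pos; [lra| left; apply Rinv_0_lt_compat; nra]).
  destruct (Rle_dec 100 (N2 y)).
  - destruct (step_ang y 0 r) as [_ [_ [_ [G0 _]]]].
    destruct (step_ang y 1 r) as [_ [_ [_ [G1 _]]]].
    destruct (step_ang y 2 r) as [_ [_ [_ [G2 _]]]].
    destruct (step_ang y 3 r) as [_ [_ [_ [G3 _]]]].
    unfold Q2, avg4.
    set (N := N2 y) in *.
    assert (6 / N <= 24 * (N / ((N + 5) * (N + 5)))).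
    { apply Rmult_le_reg_r with (N * ((N + 5) * (N + 5))). nra.
      replace (6 / N * (N * ((N + 5) * (N + 5)))) with (6 * ((N + 5) * (N + 5))) by (field; lra).
      replace (24 * (N / ((N + 5) * (N + 5))) * (N * ((N + 5) * (N + 5)))) with (24 * (N * N)) by (field; nra).
      nra. }
    lra.
  - pose proof (inv_sq_lb y ltac:(lra)).
    unfold Q2, avg4.
    pose proof (ang_bound y (padd y (step 0))). pose proof (ang_bound y (padd y (step 1))).
    pose proof (ang_bound y (padd y (step 2))). pose proof (ang_bound y (padd y (step 3))).
    lra.
Qed.

Lemma green_gen (k G : pt -> R) (C : R) m y :
  (forall z, k z <= C * (Q G z - G z)) ->
  rsum (fun t => P t k y) m <= C * (P m G y - G y).
Proof.
  intros H. rewrite (Dynkin m G y). 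
  replace (C * (G y + rsum (fun t : nat => P t (fun y0 : pt => Q G y0 - G y0) y) m - G y))
    with (rsum (fun t => P t (fun z => C * (Q G z - G z)) y) m).
  apply rsum_le; intros; apply P_le; auto.
  replace (G y + rsum (fun t : nat => P t (fun y0 : pt => Q G y0 - G y0) y) m - G y)
    with (rsum (fun t : nat => P t (fun y0 : pt => Q G y0 - G y0) y) m) by ring.
  rewrite <- rsum_scal. apply rsum_ext; intros. rewrite P_scal. reflexivity.
Qed.

Lemma K_bound m y : rsum (fun t => P t (fun z => Rabs (Dr z)) y) m <= 50000 * ln (1 + INR m).
Proof.
  eapply Rle_trans. apply green_gen with (G := Lc 2). intros; apply Dr_bound.
  pose proof (PF_bound m y). lra.
Qed.

Lemma V_bound m y : rsum (fun t => P t Q2 y) m <= 24 * (5 * (ln (1 + 2 * INR m) * ln (1 + 2 * INR m)) + 10) + 200000 * ln (1 + INR m).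
Proof.
  replace (rsum (fun t => P t Q2 y) m) with (rsum (fun t => P t Q2 y) m + 0) by ring.
  eapply Rle_trans. apply Rplus_le_compat_l. apply Rle_refl.
  assert (rsum (fun t => P t Q2 y) m <= rsum (fun t => P t (fun z => 24 * (Q L2 z - L2 z)) y + P t (fun z => 200000 * (Q (Lc 2) z - Lc 2 z)) y) m).
  { apply rsum_le; intros. rewrite <- P_plus. apply P_le. apply Q2_bound. }
  rewrite rsum_plus in H.
  assert (rsum (fun t => P t (fun z => 24 * (Q L2 z - L2 z)) y) m <= 24 * (P m L2 y - L2 y)).
  { apply green_gen. intros; lra. }
  assert (rsum (fun t => P t (fun z => 200000 * (Q (Lc 2) z - Lc 2 z)) y) m <= 200000 * (P m (Lc 2) y - Lc 2 y)).
  { apply green_gen. intros; lra. }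
  pose proof (PL2_bound m y). pose proof (PF_bound m y). simpl in H2. lra.
Qed.

Definition Yf (k : pt -> R) (m : nat) (x : pt) (xs : list nat) : R := rsum (fun t => k (walk x xs t)) m.

Lemma Yf_cons k m x d s : Yf k (S m) x (d :: s) = k x + Yf k m (padd x (step d)) s.
Proof. unfold Yf. rewrite rsum_shift. reflexivity. Qed.

Definition bf k m x := Expect m (fun xs => Yf k m x xs).
Definition af k m x := Expect m (fun xs => Yf k m x xs * Yf k m x xs).

Lemma bf_S k m x : bf k (S m) x = k x + avg4 (fun d => bf k m (padd x (step d))).
Proof. unfold bf. rewrite Expect_S. 
  rewrite (avg4_ext _ (fun d => k x + Expect m (fun xs => Yf k m (padd x (step d)) xs))).
  unfold avg4; lra. intros d. rewrite <- (Expect_const m (k x)) at 1. rewrite <- Expect_plus. apply Expect_ext; intros; apply Yf_cons. Qed.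

Lemma af_S k m x : af k (S m) x = avg4 (fun d => k x * k x + 2 * k x * bf k m (padd x (step d)) + af k m (padd x (step d))).
Proof. unfold af. rewrite Expect_S. apply avg4_ext; intros d.
  set (z := padd x (step d)).
  transitivity (Expect m (fun xs => k x * k x + (2 * k x * Yf k m z xs + Yf k m z xs * Yf k m z xs))).
  apply Expect_ext; intros; rewrite Yf_cons; fold z; ring.
  rewrite Expect_plus, Expect_plus, Expect_const, Expect_scal. unfold bf, af. rewrite Rplus_assoc. reflexivity. Qed.

Lemma bf_nonneg k m x : (forall z, 0 <= k z) -> 0 <= bf k m x.
Proof. intros H. unfold bf. rewrite <- (Expect_const m 0). apply Expect_le; intros.
  unfold Yf. apply rsum_nonneg; auto. Qed.

Lemma af_bound k M K : (forall z, 0 <= k z) -> (forall j y, (j <= M)%nat -> bf k j y <= K) ->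
  forall j, (j <= M)%nat -> forall x, af k j x <= 2 * K * bf k j x.
Proof.
  intros Hk HK. induction j; intros Hj x.
  - unfold af, bf, Yf. rewrite !Expect_0. simpl. lra.
  - rewrite af_S. 
    assert (Hb := HK (S j) x Hj). rewrite bf_S in Hb |- *.
    eapply Rle_trans. apply avg4_le. intros d. apply Rplus_le_compat_l. apply (IHj ltac:(lia)).
    set (B := avg4 (fun d => bf k j (padd x (step d)))) in *.
    assert (HB : 0 <= B) by (unfold B, avg4; pose proof (bf_nonneg k j (padd x (step 0)) Hk);
      pose proof (bf_nonneg k j (padd x (step 1)) Hk); pose proof (bf_nonneg k j (padd x (step 2)) Hk);
      pose proof (bf_nonneg k j (padd x (step 3)) Hk); lra).
    assert (E : avg4 (fun d => k x * k x + 2 * k x * bf k j (padd x (step d)) + 2 * K * bf k j (padd x (step d)))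
      = k x * k x + 2 * k x * B + 2 * K * B) by (unfold B, avg4; field).
    rewrite E. pose proof (Hk x). nra.
Qed.

Lemma bf_P k m x : bf k m x = rsum (fun t => P t k x) m.
Proof. unfold bf, Yf. rewrite Expect_rsum. apply rsum_ext; intros. apply Expect_walk_P. lia. Qed.

Lemma rsum_minus f g n : rsum (fun t => f t - g t) n = rsum f n - rsum g n.
Proof. induction n; simpl; [ring|]. rewrite IHn; ring. Qed.

Fixpoint runmax (x : nat -> R) (t : nat) : R :=
  match t with O => x O | S m => Rmax (runmax x m) (x (S m)) end.

Lemma runmax_ext x y n : (forall t, (t <= n)%nat -> x t = y t) -> runmax x n = runmax y n.
Proof. induction n; intros H; simpl. apply H; lia. rewrite IHn, H; auto; lia. Qed.

Lemma runmax_ge x n t : (t <= n)%nat -> x t <= runmax x n.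
Proof. induction n; intros H; simpl. replace t with 0%nat by lia; lra.
  destruct (Nat.eq_dec t (S n)). subst; apply Rmax_r. eapply Rle_trans. apply IHn; lia. apply Rmax_l. Qed.

Lemma runmax_mono x i n : (i <= n)%nat -> runmax x i <= runmax x n.
Proof. induction n; intros H. replace i with 0%nat by lia; lra.
  destruct (Nat.eq_dec i (S n)). subst; lra. simpl. eapply Rle_trans. apply IHn; lia. apply Rmax_l. Qed.

Lemma runmax_nonneg x n : (forall t, 0 <= x t) -> 0 <= runmax x n.
Proof. intros H. eapply Rle_trans. apply (H 0%nat). apply runmax_ge; lia. Qed.

Lemma traj_inv x n : (forall t, 0 <= x t) -> x 0%nat = 0 ->
  x n <= runmax x n /\
  0 <= 4 * x n * runmax x n - 2 * (runmax x n * runmax x n) - 4 * rsum (fun i => runmax x i * (x (S i) - x i)) n.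
Proof.
  intros Hx H0. induction n.
  - simpl. rewrite H0. lra.
  - destruct IHn as [H1 H2]. simpl runmax. simpl rsum.
    pose proof (Hx n). pose proof (Hx (S n)).
    unfold Rmax. destruct (Rle_dec (runmax x n) (x (S n))).
    + split. lra. pose proof (Rle_0_sqr (x (S n) - runmax x n)). unfold Rsqr in *. lra.
    + split. lra. lra.
Qed.

Lemma traj x n : (forall t, 0 <= x t) -> x 0%nat = 0 ->
  runmax x n * runmax x n <= 4 * (x n * x n) - 4 * rsum (fun i => runmax x i * (x (S i) - x i)) n.
Proof. intros. destruct (traj_inv x n H H0). pose proof (Rle_0_sqr (2 * x n - runmax x n)). unfold Rsqr in *. lra. Qed.

Lemma Rmax_sq r a : 0 <= r -> 0 <= a -> Rmax (r * r) (a ^ 2) = Rmax r a * Rmax r a.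
Proof. intros. unfold Rmax. destruct (Rle_dec r a); destruct (Rle_dec (r*r) (a^2)); simpl in *; nra. Qed.

Definition th z0 xs t := Rabs (Theta z0 xs t).

Lemma supTheta2_eq z0 xs n : supTheta2 z0 xs n = runmax (th z0 xs) n * runmax (th z0 xs) n.
Proof.
  induction n.
  - unfold supTheta2, th; simpl. rewrite Rabs_R0. ring.
  - unfold supTheta2 in *. rewrite seq_S, fold_left_app. rewrite IHn. cbn [fold_left].
    replace (1 + n)%nat with (S n) by lia.
    change (Rabs (Theta z0 xs (S n))) with (th z0 xs (S n)). cbn [runmax].
    apply Rmax_sq. apply runmax_nonneg; intros; apply Rabs_pos. apply Rabs_pos.
Qed.

Lemma Theta_sq z0 xs n : Theta z0 xs n * Theta z0 xs n =
  rsum (fun i => 2 * Theta z0 xs i * phi z0 xs (S i) + phi z0 xs (S i) * phi z0 xs (S i)) n.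
Proof. induction n; simpl. ring. rewrite <- IHn. ring. Qed.

Definition term z0 xs i :=
  8 * Theta z0 xs i * phi z0 xs (S i) + 4 * (phi z0 xs (S i) * phi z0 xs (S i))
  - 4 * runmax (th z0 xs) i * (th z0 xs (S i) - th z0 xs i).

Lemma sup_path z0 xs n : supTheta2 z0 xs n <= rsum (fun i => term z0 xs i) n.
Proof.
  rewrite supTheta2_eq. eapply Rle_trans. apply traj. intros; apply Rabs_pos.
  unfold th; simpl; rewrite Rabs_R0; reflexivity.
  assert (th z0 xs n * th z0 xs n = Theta z0 xs n * Theta z0 xs n).
  { unfold th. rewrite <- Rabs_mult. apply Rabs_right. nra. }
  rewrite H, Theta_sq.
  rewrite (rsum_ext (fun i => term z0 xs i) (fun t => 4 * (2 * Theta z0 xs t * phi z0 xs (S t) + phi z0 xs (S t) * phi z0 xs (S t)) - 4 * (runmax (th z0 xs) t * (th z0 xs (S t) - th z0 xs t)))) by (intros; unfold term; ring).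
  rewrite rsum_minus, !rsum_scal. lra.
Qed.

Lemma avg_ineq Th R a0 a1 a2 a3 : Rabs Th <= R -> 0 <= R ->
  let D := (a0 + a1 + a2 + a3) / 4 in
  (8 * Th * a0 + 4 * (a0 * a0) - 4 * R * (Rabs (Th + a0) - Rabs Th) +
   (8 * Th * a1 + 4 * (a1 * a1) - 4 * R * (Rabs (Th + a1) - Rabs Th)) +
   (8 * Th * a2 + 4 * (a2 * a2) - 4 * R * (Rabs (Th + a2) - Rabs Th)) +
   (8 * Th * a3 + 4 * (a3 * a3) - 4 * R * (Rabs (Th + a3) - Rabs Th))) / 4
  <= 12 * R * Rabs D + 4 * ((a0 * a0 + a1 * a1 + a2 * a2 + a3 * a3) / 4).
Proof.
  intros HT HR D.
  assert (Htri : Rabs (Th + D) <= (Rabs (Th + a0) + Rabs (Th + a1) + Rabs (Th + a2) + Rabs (Th + a3)) / 4).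
  { replace (Th + D) with (((Th + a0) + (Th + a1) + (Th + a2) + (Th + a3)) / 4) by (unfold D; field).
    unfold Rdiv. rewrite Rabs_mult. rewrite (Rabs_right (/4)) by lra.
    apply Rmult_le_compat_r. lra.
    eapply Rle_trans. apply Rabs_triang. apply Rplus_le_compat_r.
    eapply Rle_trans. apply Rabs_triang. apply Rplus_le_compat_r.
    apply Rabs_triang. }
  assert (Hinv : Rabs Th - Rabs D <= Rabs (Th + D)).
  { pose proof (Rabs_triang (Th + D) (- D)). replace (Th + D + - D) with Th in H by ring.
    rewrite Rabs_Ropp in H. lra. }
  assert (HTD : Th * D <= R * Rabs D).
  { eapply Rle_trans. apply Rle_abs. rewrite Rabs_mult. apply Rmult_le_compat_r. apply Rabs_pos. auto. }
  assert (E : (8 * Th * a0 + 4 * (a0 * a0) - 4 * R * (Rabs (Th + a0) - Rabs Th) +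
   (8 * Th * a1 + 4 * (a1 * a1) - 4 * R * (Rabs (Th + a1) - Rabs Th)) +
   (8 * Th * a2 + 4 * (a2 * a2) - 4 * R * (Rabs (Th + a2) - Rabs Th)) +
   (8 * Th * a3 + 4 * (a3 * a3) - 4 * R * (Rabs (Th + a3) - Rabs Th))) / 4 =
   8 * (Th * D) + 4 * ((a0 * a0 + a1 * a1 + a2 * a2 + a3 * a3) / 4) - 4 * R * ((Rabs (Th + a0) + Rabs (Th + a1) + Rabs (Th + a2) + Rabs (Th + a3)) / 4 - Rabs Th))
   by (unfold D; field).
  rewrite E.
  assert (R * (Rabs Th - Rabs D) <= R * ((Rabs (Th + a0) + Rabs (Th + a1) + Rabs (Th + a2) + Rabs (Th + a3)) / 4)).
  { apply Rmult_le_compat_l; lra. }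
  pose proof (Rabs_pos D). nra.
Qed.

Definition Tcond z0 (p : list nat) (d : nat) : R :=
  let y := walk z0 p (length p) in let a := ang y (padd y (step d)) in
  8 * Theta z0 p (length p) * a + 4 * (a * a)
  - 4 * runmax (th z0 p) (length p) * (Rabs (Theta z0 p (length p) + a) - th z0 p (length p)).

Lemma runmax_th_firstn z0 xs i : runmax (th z0 (firstn i xs)) i = runmax (th z0 xs) i.
Proof. apply runmax_ext; intros. unfold th. rewrite Theta_firstn; auto. Qed.

Lemma term_cond z0 n i : (i < n)%nat ->
  Expect n (fun xs => term z0 xs i) <=
  Expect n (fun xs => 12 * runmax (th z0 xs) n * Rabs (Dr (walk z0 xs i)) + 4 * Q2 (walk z0 xs i)).
Proof.
  intros Hi. replace n with (i + S (n - i - 1))%nat by lia.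
  set (m := (n - i - 1)%nat).
  rewrite (Expect_cond i m _ (fun p d => Tcond z0 p d)).
  2: { intros xs Hl. unfold Tcond, term.
       assert (Hlen : length (firstn i xs) = i) by (rewrite length_firstn; lia).
       rewrite Hlen. rewrite runmax_th_firstn.
       rewrite walk_firstn by lia. rewrite Theta_firstn by lia.
       unfold th. rewrite Theta_firstn by lia. rewrite Theta_S. rewrite phi_ang.
       rewrite (walk_step z0 xs i) by lia. reflexivity. }
  set (U := fun p : list nat => 12 * runmax (th z0 p) i * Rabs (Dr (walk z0 p i)) + 4 * Q2 (walk z0 p i)).
  apply Rle_trans with (Expect i U).
  - apply Expect_le_len. intros p Hp. unfold U, Tcond. rewrite Hp.
    unfold avg4, Dr, Q2, avg4.
    apply avg_ineq. 
    + unfold th. rewrite <- Rabs_Rabsolu. change (Rabs (Rabs (Theta z0 p i))) with (Rabs (th z0 p i)).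
      rewrite Rabs_right by (apply Rle_ge, Rabs_pos). apply runmax_ge; lia.
    + apply runmax_nonneg; intros; apply Rabs_pos.
  - rewrite <- (Expect_prefix i (S m) (fun xs => U (firstn i xs)) U) by auto.
    apply Expect_le_len. intros xs Hl. unfold U. rewrite runmax_th_firstn, walk_firstn by lia.
    apply Rplus_le_compat_r. apply Rmult_le_compat_r. apply Rabs_pos. apply Rmult_le_compat_l. lra.
    apply runmax_mono. lia.
Qed.

Lemma E_sup z0 n :
  Expect n (fun xs => supTheta2 z0 xs n) <=
  144 * af (fun z => Rabs (Dr z)) n z0 + 8 * rsum (fun t => P t Q2 z0) n.
Proof.
  set (E := Expect n (fun xs => supTheta2 z0 xs n)).
  assert (H1 : E <= Expect n (fun xs => 12 * runmax (th z0 xs) n * Yf (fun z => Rabs (Dr z)) n z0 xs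
                                     + 4 * Yf Q2 n z0 xs)).
  { eapply Rle_trans. apply Expect_le. intros xs. apply sup_path.
    rewrite Expect_rsum.
    eapply Rle_trans. apply rsum_le. intros t Ht. apply term_cond; auto.
    rewrite <- Expect_rsum. apply Req_le. apply Expect_ext; intros xs.
    unfold Yf. rewrite rsum_plus, <- rsum_scal, <- rsum_scal. f_equal.
    }
  assert (H2 : E <= Expect n (fun xs => (1/2) * supTheta2 z0 xs n + (72 * (Yf (fun z => Rabs (Dr z)) n z0 xs * Yf (fun z => Rabs (Dr z)) n z0 xs)
                                     + 4 * Yf Q2 n z0 xs))).
  { eapply Rle_trans. apply H1. apply Expect_le. intros xs. rewrite supTheta2_eq.
    set (R := runmax (th z0 xs) n). set (Y := Yf (fun z => Rabs (Dr z)) n z0 xs).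
    pose proof (Rle_0_sqr (R - 12 * Y)). unfold Rsqr in *. lra. }
  rewrite Expect_plus, Expect_plus, Expect_scal, Expect_scal, Expect_scal in H2. fold E in H2.
  change (Expect n (Yf Q2 n z0)) with (bf Q2 n z0) in H2. fold (af (fun z => Rabs (Dr z)) n z0) in H2. rewrite bf_P in H2.
  lra.
Qed.

Lemma ln_le_nat j n : (j <= n)%nat -> ln (1 + INR j) <= ln (1 + INR n).
Proof. intros. apply ln_le. pose proof (pos_INR j); lra. apply le_INR in H. lra. Qed.

Lemma E_sup2 z0 n : let K := 50000 * ln (1 + INR n) in
  Expect n (fun xs => supTheta2 z0 xs n) <=
  288 * (K * K) + 8 * (24 * (5 * (ln (1 + 2 * INR n) * ln (1 + 2 * INR n)) + 10) + 200000 * ln (1 + INR n)).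
Proof.
  intros K. eapply Rle_trans. apply E_sup.
  assert (HK : forall j y, (j <= n)%nat -> bf (fun z => Rabs (Dr z)) j y <= K).
  { intros j y Hj. rewrite bf_P. eapply Rle_trans. apply K_bound. unfold K.
    apply Rmult_le_compat_l. lra. apply ln_le_nat; auto. }
  pose proof (af_bound (fun z => Rabs (Dr z)) n K (fun z => Rabs_pos _) HK n (le_n n) z0).
  pose proof (HK n z0 (le_n n)).
  pose proof (bf_nonneg (fun z => Rabs (Dr z)) n z0 (fun z => Rabs_pos _)).
  assert (0 <= K). { eapply Rle_trans; eauto. }
  pose proof (V_bound n z0).
  assert (af (fun z => Rabs (Dr z)) n z0 <= 2 * (K * K)) by nra.
  lra.
Qed.

Theorem lemmaA1 :
  exists C : R, forall (z0 : pt), z0 <> (0, 0) -> forall n : nat, (2 <= n)%nat ->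
    Expect n (fun xs => supTheta2 z0 xs n) <= C * (ln (INR n)) ^ 2.
Proof.
  exists (10 ^ 13). intros z0 _ n Hn.
  pose proof (E_sup2 z0 n) as H. simpl in H.
  assert (Hn2 : 2 <= INR n) by (apply le_INR in Hn; simpl in Hn; lra).
  set (L := ln (INR n)).
  assert (HL : / 2 < L) by (pose proof ln_lt_2; pose proof (ln_le 2 (INR n) ltac:(lra) Hn2); unfold L; lra).
  assert (H1 : ln (1 + INR n) <= 2 * L).
  { unfold L. replace (2 * ln (INR n)) with (ln (INR n) + ln (INR n)) by ring.
    rewrite <- ln_mult by lra. apply ln_le. lra. nra. }
  assert (H2 : ln (1 + 2 * INR n) <= 3 * L).
  { unfold L. replace (3 * ln (INR n)) with (ln (INR n) + ln (INR n) + ln (INR n)) by ring.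
    rewrite <- !ln_mult by nra. apply ln_le. lra. nra. }
  assert (H1p : 0 <= ln (1 + INR n)) by (rewrite <- ln_1; apply ln_le; lra).
  assert (H2p : 0 <= ln (1 + 2 * INR n)) by (rewrite <- ln_1; apply ln_le; lra).
  set (a := ln (1 + INR n)) in *. set (b := ln (1 + 2 * INR n)) in *.
  assert (a * a <= 4 * (L * L)) by nra.
  assert (b * b <= 9 * (L * L)) by nra.
  assert (1 <= 4 * (L * L)) by nra.
  assert (L <= 2 * (L * L)) by nra.
  replace (L ^ 2) with (L * L) by ring.
  nra.
Qed.
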